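(* Let $N$ be a positive integer, let $\Delta\neq 1$ be a fundamental discriminant, $r\in\mathbb{Z}$ with $\Delta\equiv r^2\pmod{4N}$, $h\in\mathcal{D}$ and $\ell\in\mathrm{Iso}(V)$. If $\mathfrak{d}_{\Delta,r}(\ell,h)\neq 0$, then $p^2\mid N$ for every prime $p\mid\Delta$. In particular, if $N$ is square-free and $\Delta\neq 1$, then $\mathfrak{d}_{\Delta,r}(\ell,h)=0$ always.
   Context: $V$ is the space of trace-zero rational $2\times2$ matrices with $Q(\lambda)=N\det\lambda$ and $(\lambda,\mu)=-N\operatorname{tr}(\lambda\mu)$; $\mathrm{Iso}(V)$ is the set of isotropic lines in $V$. $L=\left\{\begin{pmatrix} b & -a/N\\ c & -b\end{pmatrix}: a,b,c\in\mathbb{Z}\right\}$, $L'=\left\{\begin{pmatrix} b/2N & -a/N\\ c & -b/2N\end{pmatrix}: a,b,c\in\mathbb{Z}\right\}$, $\mathcal{D}=L'/L$. For $\ell\in\mathrm{Iso}(V)$ let $\lambda_\ell$ be a primitive generator of $\ell\cap L$. For $k\in\mathcal{D}$ (viewed as a coset $L+k\subset L'$) put $\delta_\ell(k)=1$ if $\ell\cap(L+k)\neq\emptyset$ and $\delta_\ell(k)=0$ otherwise. If $\delta_\ell(k)=1$, then $\ell\cap(L+k)=\mathbb{Z}\lambda_\ell+k_\ell$ for some $k_\ell=s\lambda_\ell$, $s\in\mathbb{Q}$; writing $s=u/w$ in lowest terms ($w>0$) define $d(\ell,k)=w$ (it depends only on $\ell$ and $k$) and $k'_\ell=\frac{1}{d(\ell,k)}\lambda_\ell$.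 For $\delta=\begin{pmatrix} b/2N & -a/N\\ c & -b/2N\end{pmatrix}\in L'$, $\chi_\Delta(\delta)=\left(\frac{\Delta}{n}\right)$ if $\Delta\mid b^2-4Nac$, $(b^2-4Nac)/\Delta$ is a square mod $4N$ and $\gcd(a,b,c,\Delta)=1$ ($n$ any integer coprime to $\Delta$ represented by $[a,b,Nc]$), else $0$. For $\Delta\neq1$ define $\mathfrak{d}_{\Delta,r}(\ell,h)=\chi_\Delta((rh)'_\ell)$ if $\delta_\ell(rh)=1$ and $\Delta\mid d(\ell,rh)$, and $\mathfrak{d}_{\Delta,r}(\ell,h)=0$ otherwise. *)

(* Defs.v *)
From HB Require Import structures.
From mathcomp Require Import all_boot all_order all_algebra.
From Stdlib Require Import ClassicalEpsilon.
Set Implicit Arguments. Unset Strict Implicit. Unset Printing Implicit Defensive.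
Import Order.TTheory GRing.Theory Num.Theory.
Local Open Scope ring_scope.

Definition pif {A : Type} (P : Prop) (x y : A) : A :=
  if excluded_middle_informative P then x else y.

(* classical choice of an element satisfying P (arbitrary if none exists) *)
Definition pick_int (P : int -> Prop) : int := epsilon (inhabits 0%R) P.
Definition pick_rat (P : rat -> Prop) : rat := epsilon (inhabits 0%R) P.

(* Legendre symbol for an odd prime p, via Euler's criterion *)
Definition legendre (D : int) (p : nat) : int :=
  let e := ((D %% p%:Z)%Z ^+ (p.-1 %/ 2)%N %% p%:Z)%Z in
  if e == 0 then 0 else if e == 1 then 1 else -1.

Definition kron2 (D : int) : int :=
  let m := (D %% 8)%Z in
  if (m == 1) || (m == 7) then 1 else if (m == 3) || (m == 5) then -1 else 0.

Definition kron_prime (D : int) (p : nat) : int :=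
  if p == 2%N then kron2 D else legendre D p.

Definition kron_m1 (D : int) : int := if D < 0 then -1 else 1.

Definition kron (D n : int) : int :=
  if n == 0 then (if `|D| == 1 then 1 else 0)
  else (if n < 0 then kron_m1 D else 1) *
       \prod_(pe <- prime_decomp `|n|%N) kron_prime D pe.1 ^+ pe.2.

Definition squarefree_int (m : int) : Prop :=
  m != 0 /\ forall p : nat, prime p -> ~ ((p ^ 2)%:Z %| m)%Z.

Definition fundamental_discriminant (D : int) : Prop :=
  ((D %% 4)%Z = 1 /\ squarefree_int D) \/
  (exists m : int, D = 4 * m /\ ((m %% 4)%Z = 2 \/ (m %% 4)%Z = 3) /\ squarefree_int m).

Definition Lmx (N : nat) (a b c : rat) : 'M[rat]_2 :=
  \matrix_(i < 2, j < 2)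
    if i == ord0 then (if j == ord0 then b else - (a / N%:R))
    else (if j == ord0 then c else - b).

Definition inV (M : 'M[rat]_2) : Prop := \tr M = 0.

Definition Qform (N : nat) (M : 'M[rat]_2) : rat := N%:R * \det M.

Definition inL (N : nat) (M : 'M[rat]_2) : Prop :=
  exists a b c : int, M = Lmx N a%:~R b%:~R c%:~R.

Definition inL' (N : nat) (M : 'M[rat]_2) : Prop :=
  exists a b c : int, M = Lmx N a%:~R (b%:~R / (2 * N)%:R) c%:~R.

(* an isotropic line ell in Iso(V) is given by a nonzero isotropic generator lam0 *)
Definition isotropic_gen (N : nat) (lam0 : 'M[rat]_2) : Prop :=
  lam0 != 0 /\ inV lam0 /\ Qform N lam0 = 0.

Definition on_line (lam0 M : 'M[rat]_2) : Prop := exists t : rat, M = t *: lam0.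

Definition primitive_gen (N : nat) (lam0 lam : 'M[rat]_2) : Prop :=
  on_line lam0 lam /\ inL N lam /\
  forall M, on_line lam0 M -> inL N M -> exists m : int, M = m%:~R *: lam.

Definition delta_ell (N : nat) (lam0 k : 'M[rat]_2) : Prop :=
  exists M, on_line lam0 M /\ inL N (M - k).

Definition kell_coeff (N : nat) (lam0 lam k : 'M[rat]_2) (s : rat) : Prop :=
  forall M, (on_line lam0 M /\ inL N (M - k)) <->
            exists m : int, M = (m%:~R + s) *: lam.

Definition d_ell (N : nat) (lam0 lam k : 'M[rat]_2) : int :=
  denq (pick_rat (kell_coeff N lam0 lam k)).

Definition represents (a b c : int) (n : int) : Prop :=
  exists x y : int, n = a * x ^+ 2 + b * x * y + c * y ^+ 2.

Definition chi_coords (N : nat) (D a b c : int) : int :=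
  let disc := b ^+ 2 - 4 * N%:Z * a * c in
  pif [/\ (D %| disc)%Z,
          exists x : int, ((disc %/ D)%Z = x ^+ 2 %[mod (4 * N)%:Z])%Z
        & gcdz (gcdz a b) (gcdz c D) = 1]
      (kron D (pick_int (fun n => coprimez n D /\ represents a b (N%:Z * c) n)))
      0.

(* delta = [[b/2N, -a/N], [c, -b/2N]] in L' *)
Definition chi (N : nat) (D : int) (delta : 'M[rat]_2) : int :=
  pif (inL' N delta)
      (chi_coords N D (numq (- (N%:R * delta ord0 (lift ord0 ord0))))
                      (numq ((2 * N)%:R * delta ord0 ord0))
                      (numq (delta (lift ord0 ord0) ord0)))
      0.

(* frak d_{Delta,r}(ell, h): ell given by lam0, lam = chosen primitive generator
   lambda_ell, h given by a representative k in L' *)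
Definition frakd (N : nat) (D r : int) (lam0 lam k : 'M[rat]_2) : int :=
  let rk := r%:~R *: k in
  pif (delta_ell N lam0 rk /\ (D %| d_ell N lam0 lam rk)%Z)
      (chi N D ((d_ell N lam0 lam rk)%:~R^-1 *: lam))
      0.

(* Main.v *)
Require Import Defs.
From mathcomp Require Import all_boot all_order all_algebra.
From mathcomp Require Import ring.
From Stdlib Require Import ClassicalEpsilon.
Import Order.TTheory GRing.Theory Num.Theory.
Local Open Scope ring_scope.

Lemma det2 (R : comNzRingType) (A : 'M[R]_2) :
  \det A = A 0 0 * A 1 1 - A 0 1 * A 1 0.
Proof.
rewrite (expand_det_row _ 0) !big_ord_recl big_ord0 /cofactor !det_mx11 /=.
rewrite !mxE /= expr0 expr1 mul1r mulN1r addr0 mulrN.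
have E1 : forall i : 'I_2, (val i == 1)%N -> i = 1 by move=> i h; apply/val_inj/eqP.
have E0 : forall i : 'I_2, (val i == 0)%N -> i = 0 by move=> i h; apply/val_inj/eqP.
rewrite (E0 (lift (lift _ _) _)); last by [].
rewrite (E1 (lift _ _)); last by [].
by rewrite (E0 ord0).
Qed.

Definition i1 : 'I_2 := @Ordinal 2 1 isT.

Lemma det2' (R : comNzRingType) (A : 'M[R]_2) :
  \det A = A ord0 ord0 * A i1 i1 - A ord0 i1 * A i1 ord0.
Proof.
rewrite det2.
have E1 : (1 : 'I_2) = i1 by apply/val_inj.
have E0 : (0 : 'I_2) = ord0 by apply/val_inj.
by rewrite E1 E0.
Qed.

Lemma ord2P (i : 'I_2) : i = ord0 \/ i = i1.
Proof. by case: i => [[|[|//]] Hi]; [left|right]; apply: val_inj. Qed.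

Lemma mx2_eq (A B : 'M[rat]_2) :
  A ord0 ord0 = B ord0 ord0 -> A ord0 i1 = B ord0 i1 -> A i1 ord0 = B i1 ord0 ->
  A i1 i1 = B i1 i1 -> A = B.
Proof.
move=> h1 h2 h3 h4; apply/matrixP => i j.
by case: (ord2P i) => ->; case: (ord2P j) => ->.
Qed.

Lemma Lmx00 N a b c : Lmx N a b c ord0 ord0 = b. Proof. by rewrite mxE. Qed.
Lemma Lmx01 N a b c : Lmx N a b c ord0 i1 = - (a / N%:R). Proof. by rewrite mxE. Qed.
Lemma Lmx10 N a b c : Lmx N a b c i1 ord0 = c. Proof. by rewrite mxE. Qed.
Lemma Lmx11 N a b c : Lmx N a b c i1 i1 = - b. Proof. by rewrite mxE. Qed.

Lemma inLP N M : (0 < N)%N ->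
  inL N M <-> [/\ M i1 i1 = - M ord0 ord0, M ord0 ord0 \is a Num.int,
                  N%:R * M ord0 i1 \is a Num.int & M i1 ord0 \is a Num.int].
Proof.
move=> N0; have NR : (N%:R : rat) != 0 by rewrite pnatr_eq0 -lt0n.
split.
  case=> a [b [c ->]]; rewrite Lmx00 Lmx01 Lmx10 Lmx11; split => //.
  by rewrite mulrN mulrC divfK // rpredN intr_int.
case=> h11 /intrP [b hb] /intrP [a ha] /intrP [c hc].
exists (- a), b, c; apply: mx2_eq; rewrite ?Lmx00 ?Lmx01 ?Lmx10 ?Lmx11 //.
- by rewrite intrN -ha mulNr opprK mulrC mulKf.
- by rewrite h11 hb.
Qed.

Section L.
Variable N : nat.
Hypothesis N0 : (0 < N)%N.

Lemma NR : (N%:R : rat) != 0.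
Proof. by rewrite pnatr_eq0 -lt0n. Qed.

Lemma inL_add M M' : inL N M -> inL N M' -> inL N (M + M').
Proof.
move=> /(inLP _ _ N0) [h1 h2 h3 h4] /(inLP _ _ N0) [h1' h2' h3' h4'].
apply/(inLP _ _ N0); rewrite !mxE h1 h1' opprD; split => //; rewrite ?rpredD //.
by rewrite mulrDr rpredD.
Qed.

Lemma inL_scale (m : int) M : inL N M -> inL N (m%:~R *: M).
Proof.
move=> /(inLP _ _ N0) [h1 h2 h3 h4].
apply/(inLP _ _ N0); rewrite !mxE h1 mulrN; split => //.
- by rewrite rpredM ?intr_int.
- by rewrite mulrCA rpredM ?intr_int.
- by rewrite rpredM ?intr_int.
Qed.

Lemma inL_opp M : inL N M -> inL N (- M).
Proof.
move=> h; have := inL_scale (-1) _ h; by rewrite scaleN1r.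
Qed.

Lemma inL_sub M M' : inL N M -> inL N M' -> inL N (M - M').
Proof. by move=> h h'; apply: inL_add => //; apply: inL_opp. Qed.

Lemma tr2 (A : 'M[rat]_2) : \tr A = A ord0 ord0 + A i1 i1.
Proof.
rewrite /mxtrace !big_ord_recl big_ord0 addr0.
by congr (A _ _ + A _ _); apply: val_inj.
Qed.

Lemma lam_neq0 lam0 lam : isotropic_gen N lam0 -> primitive_gen N lam0 lam -> lam != 0.
Proof.
move=> [nz0 [tr0 _]] [_ [_ prim]].
set e00 := lam0 ord0 ord0; set e01 := lam0 ord0 i1; set e10 := lam0 i1 ord0.
set n : int := N%:Z * denq e00 * denq e01 * denq e10.
have hL : inL N (n%:~R *: lam0).
  apply/(inLP _ _ N0); rewrite !mxE; split.
  - by move: tr0; rewrite /inV tr2 => /eqP; rewrite addrC addr_eq0 => /eqP ->; rewrite mulrN.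
  - apply/intrP; exists (N%:Z * numq e00 * denq e01 * denq e10).
    by rewrite /n !intrM numqE /e00 /e01 /e10; ring.
  - apply/intrP; exists (N%:Z * N%:Z * denq e00 * numq e01 * denq e10).
    by rewrite /n !intrM numqE /e00 /e01 /e10; ring.
  - apply/intrP; exists (N%:Z * denq e00 * denq e01 * numq e10).
    by rewrite /n !intrM numqE /e00 /e01 /e10; ring.
have [m hm] := prim _ (ex_intro _ _ erefl) hL.
apply/eqP => l0; move: hm; rewrite l0 scaler0 => /eqP; rewrite scaler_eq0 (negbTE nz0) orbF.
rewrite intr_eq0 /n !mulf_eq0 !denq_eq0 /=.
by rewrite !orbF => /eqP [] hN; move: N0; rewrite hN.
Qed.

Lemma kell_exists lam0 lam k : isotropic_gen N lam0 -> primitive_gen N lam0 lam ->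
  delta_ell N lam0 k -> exists s, kell_coeff N lam0 lam k s.
Proof.
move=> iso pr [M0 [[t ->] hM0]].
have lnz := lam_neq0 _ _ iso pr.
case: (pr) => [[u hu] [hL prim]].
have u0 : u != 0 by apply: contraNneq lnz => u0; rewrite hu u0 scale0r.
exists (t / u) => M; split.
  case=> [[t' ->] hM].
  have := inL_sub _ _ hM hM0; rewrite opprB addrA subrK -scalerBl => hd.
  have [m hm] := prim _ (ex_intro _ _ erefl) hd.
  exists m; rewrite scalerDl -hm hu scalerA divfK //.
  by rewrite -scalerDl subrK.
case=> m ->; split.
  by exists ((m%:~R + t / u) * u); rewrite hu scalerA.
rewrite scalerDl -addrA; apply: inL_add; first exact: inL_scale.
by rewrite {1}hu scalerA divfK.
Qed.

Lemma det_rel lam0 lam a b c : isotropic_gen N lam0 -> on_line lam0 lam ->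
  lam = Lmx N a%:~R b%:~R c%:~R -> N%:Z * b ^+ 2 = a * c.
Proof.
move=> [_ [_ hQ]] [u hu] hl.
have d0 : \det lam0 = 0.
  by move: hQ; rewrite /Qform => /eqP; rewrite mulf_eq0 (negbTE NR) => /eqP.
have : \det lam = 0 by rewrite hu detZ d0 mulr0.
rewrite det2' hl Lmx00 Lmx01 Lmx10 Lmx11 => h.
apply: (intr_inj (R:=rat)); apply/eqP; rewrite -subr_eq0; apply/eqP.
have NR' := NR.
rewrite !intrM.
have -> : ((N%:Z)%:~R * (b%:~R * b%:~R) - a%:~R * c%:~R : rat) =
  - N%:R * (b%:~R * - b%:~R - - (a%:~R / N%:R) * c%:~R).
  rewrite pmulrn. by field.
by rewrite h mulr0.
Qed.

End L.

Lemma dvd_den (s : rat) (a : int) : s * a%:~R \is a Num.int -> (denq s %| a)%Z.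
Proof.
move=> /intrP [z hz].
have e : numq s * a = z * denq s.
  apply: (intr_inj (R:=rat)); rewrite !intrM numqE -hz.
  by rewrite -!mulrA [_ * a%:~R]mulrC.
rewrite /dvdz; have : (`|denq s| %| `|numq s| * `|a|)%N.
  by rewrite -abszM e abszM dvdn_mull.
by rewrite Gauss_dvdr // coprime_sym coprime_num_den.
Qed.

Lemma prim_nodiv N lam0 lam (a b c : int) (p : nat) : (0 < N)%N ->
  prime p -> primitive_gen N lam0 lam -> lam != 0 ->
  lam = Lmx N a%:~R b%:~R c%:~R ->
  (p%:Z %| a)%Z -> (p%:Z %| b)%Z -> (p%:Z %| c)%Z -> False.
Proof.
move=> N0 pp [[u hu] [_ prim]] lnz hl /dvdzP [a' ha] /dvdzP [b' hb] /dvdzP [c' hc]; subst a b c.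
have p0 : (p%:R : rat) != 0 by rewrite pnatr_eq0; apply: contraTneq pp => ->.
have NR := NR _ N0.
have hM : Lmx N a'%:~R b'%:~R c'%:~R = (p%:R)^-1 *: lam.
  rewrite hl; apply: mx2_eq; rewrite !mxE /= !intrM !pmulrn.
  - by field.
  - by field; apply/andP.
  - by field.
  - by field.
have ol : on_line lam0 (Lmx N a'%:~R b'%:~R c'%:~R).
  by exists ((p%:R)^-1 * u); rewrite hM hu scalerA.
have iL : inL N (Lmx N a'%:~R b'%:~R c'%:~R) by exists a', b', c'.
have [m hm] := prim _ ol iL.
have : ((p%:R)^-1 - m%:~R) *: lam = 0 by rewrite scalerBl -hM hm subrr.
move/eqP; rewrite scaler_eq0 (negbTE lnz) orbF subr_eq0 => /eqP hpm.
have : (p%:Z * m = 1)%R.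
  apply: (intr_inj (R:=rat)); rewrite intrM -hpm pmulrn mulfV //.
move=> /(congr1 (fun x : int => `|x|%N)); rewrite abszM absz_nat /= => /eqP.
rewrite muln_eq1 => /andP [/eqP p1 _]; by rewrite p1 in pp.
Qed.

Lemma absgt1 (D : int) : (D %% 4)%Z = 1 -> D != 0 -> D != 1 -> (1 < `|D|)%N.
Proof. by case: D => [[|[|n]]|[|n]]. Qed.

Theorem proposition5p4 (N : nat) (D r : int) (lam0 lam k : 'M[rat]_2) :
  (0 < N)%N ->
  fundamental_discriminant D -> D != 1 ->
  (D = r ^+ 2 %[mod (4 * N)%:Z])%Z ->
  inL' N k ->
  isotropic_gen N lam0 ->
  primitive_gen N lam0 lam ->
  (frakd N D r lam0 lam k != 0 ->
     forall p : nat, prime p -> (p%:Z %| D)%Z -> (p ^ 2 %| N)%N) /\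
  (squarefree_int N%:Z -> frakd N D r lam0 lam k = 0).
Proof.
move=> N0 fd D1 _ hk iso pr.
have lnz := @lam_neq0 N N0 lam0 lam iso pr.
have NR := NR _ N0.
have key : frakd N D r lam0 lam k != 0 ->
     forall p : nat, prime p -> (p%:Z %| D)%Z -> (p ^ 2 %| N)%N.
  move=> hf p pp pD.
  have [dl Dd] : delta_ell N lam0 (r%:~R *: k) /\ (D %| d_ell N lam0 lam (r%:~R *: k))%Z.
    move: hf; rewrite /frakd /pif; case: excluded_middle_informative => //.
  have [s0 hs0] := @kell_exists N N0 _ _ _ iso pr dl.
  have hs := epsilon_spec (inhabits (0:rat)) _ (ex_intro _ s0 hs0).
  rewrite /d_ell /pick_rat in Dd.
  set s := epsilon _ _ in hs Dd.
  have e0 : s *: lam = ((0:int)%:~R + s) *: lam by rewrite add0r.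
  have [_ hin] := proj2 (hs (s *: lam)) (ex_intro _ 0 e0).
  case: (pr) => [ol [[a [b [c hl]]] _]].
  case: hk => [ak [bk [ck hk]]].
  move: hin => /(inLP _ _ N0) [_ _ h3 h4].
  move: h3 h4; rewrite hl hk !mxE /= => h3 h4.
  have sa : s * a%:~R \is a Num.int.
    have -> : s * a%:~R = - (N%:R * (s * - (a%:~R / N%:R) - r%:~R * - (ak%:~R / N%:R)))
       + r%:~R * ak%:~R by field.
    by rewrite rpredD ?rpredN // rpredM // intr_int.
  have sc : s * c%:~R \is a Num.int.
    have -> : s * c%:~R = (s * c%:~R - r%:~R * ck%:~R) + r%:~R * ck%:~R by ring.
    by rewrite rpredD // rpredM // intr_int.
  have pa : (p%:Z %| a)%Z := dvdz_trans pD (dvdz_trans Dd (dvd_den _ _ sa)).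
  have pc : (p%:Z %| c)%Z := dvdz_trans pD (dvdz_trans Dd (dvd_den _ _ sc)).
  have e := @det_rel N N0 _ _ _ _ _ iso ol hl.
  have e' : (N * `|b| ^ 2 = `|a| * `|c|)%N.
    by have := congr1 (fun x : int => `|x|%N) e; rewrite /= !abszM absz_nat expnS expn1.
  have [pb|npb] := boolP (p %| `|b|)%N.
    by exfalso; apply: (@prim_nodiv _ _ _ _ _ _ _ N0 pp pr lnz hl pa pb pc).
  have cop : coprime (p ^ 2) (`|b| ^ 2).
    by rewrite coprime_pexpl // coprime_pexpr // prime_coprime.
  rewrite -(Gauss_dvdl N cop) e' expnS expn1.
  exact: dvdn_mul.
split => // sq; apply/eqP; apply: contraT => hf.
have [p pp pD] : exists2 p : nat, prime p & (p%:Z %| D)%Z.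
  case: fd => [[hm [D0 _]] | [m [hD _]]].
    have h1 : (1 < `|D|)%N := absgt1 _ hm D0 D1.
    by exists (pdiv `|D|); [exact: pdiv_prime | exact: pdiv_dvd].
  by exists 2%N => //; rewrite hD; apply: dvdz_mulr.
case: sq => _ sq; exfalso; apply: (sq p pp).
exact: key hf p pp pD.
Qed.
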